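(* Let $\mathcal{L},\mathcal{M}$ be matroids with $E(\mathcal{L})\cap E(\mathcal{M})=\{g\}$, $g$ neither a loop nor a coloop in either, and $\mathcal{N}=\mathcal{L}\oplus_g\mathcal{M}$. (a) With $N=Z(\mathbf{B}\mathcal{N};\mathbf{y})$, $L=Z(\mathbf{B}\mathcal{L};\mathbf{y})$, $M=Z(\mathbf{B}\mathcal{M};\mathbf{y})$: $N=L^gM_g+L_gM^g$. (b) With $N=Z(\mathbf{I}\mathcal{N};\mathbf{y})$, $L=Z(\mathbf{I}\mathcal{L};\mathbf{y})$, $M=Z(\mathbf{I}\mathcal{M};\mathbf{y})$: $N=L^gM_g+L_gM^g-L_gM_g$. (c) With $N=Z(\mathbf{S}\mathcal{N};\mathbf{y})$, $L=Z(\mathbf{S}\mathcal{L};\mathbf{y})$, $M=Z(\mathbf{S}\mathcal{M};\mathbf{y})$: $N=L^gM_g+L_gM^g-L^gM^g$.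
   Context: For a family $\mathcal{Q}$ of subsets of a finite set, $Z(\mathcal{Q};\mathbf{y})=\sum_{S\in\mathcal{Q}}\prod_{e\in S}y_e$; $\mathbf{B}\mathcal{M},\mathbf{I}\mathcal{M},\mathbf{S}\mathcal{M}$ are the sets of bases, independent sets and spanning sets of $\mathcal{M}$. For such a polynomial $P$, $P^g=P|_{y_g=0}$ and $P_g=\partial P/\partial y_g$. Two-sum: $\mathcal{N}$ is the matroid on $E(\mathcal{L})\cup E(\mathcal{M})\setminus\{g\}$ with $\mathrm{rank}_{\mathcal{N}}(S)=\mathrm{rank}_{\mathcal{L}}(S\cap E(\mathcal{L}))+\mathrm{rank}_{\mathcal{M}}(S\cap E(\mathcal{M}))-\nu(S)$, where $\nu(S)=1$ if $g$ is in the $\mathcal{L}$-closure of $S\cap E(\mathcal{L})$ and in the $\mathcal{M}$-closure of $S\cap E(\mathcal{M})$, and $\nu(S)=0$ otherwise. *)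

(* Defs.v *)
From HB Require Import structures.
From mathcomp Require Import all_boot all_order all_algebra.
From mathcomp Require Import mpoly.
Set Implicit Arguments. Unset Strict Implicit. Unset Printing Implicit Defensive.
Import GRing.Theory.
Local Open Scope ring_scope.

(* Elements of all ground sets live in the universe 'I_n; the variable y_e is 'X_e. *)

Definition is_matroid (n : nat) (E : {set 'I_n}) (r : {set 'I_n} -> nat) : Prop :=
  [/\ (forall S : {set 'I_n}, S \subset E -> (r S <= #|S|)%N),
      (forall S S' : {set 'I_n}, S \subset S' -> S' \subset E -> (r S <= r S')%N) &
      (forall S S' : {set 'I_n}, S \subset E -> S' \subset E ->
         (r (S :|: S') + r (S :&: S') <= r S + r S')%N)].

Definition mindep n (E : {set 'I_n}) (r : {set 'I_n} -> nat) (S : {set 'I_n}) : bool :=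
  (S \subset E) && (r S == #|S|).
Definition mspanning n (E : {set 'I_n}) (r : {set 'I_n} -> nat) (S : {set 'I_n}) : bool :=
  (S \subset E) && (r S == r E).
Definition mbasis n (E : {set 'I_n}) (r : {set 'I_n} -> nat) (S : {set 'I_n}) : bool :=
  mindep E r S && mspanning E r S.

Definition in_closure n (r : {set 'I_n} -> nat) (S : {set 'I_n}) (e : 'I_n) : bool :=
  r (e |: S) == r S.

Definition is_loop n (r : {set 'I_n} -> nat) (e : 'I_n) : bool := r [set e] == 0%N.
Definition is_coloop n (E : {set 'I_n}) (r : {set 'I_n} -> nat) (e : 'I_n) : bool :=
  (r (E :\ e) < r E)%N.

Definition two_sum_ground n (EL EM : {set 'I_n}) (g : 'I_n) : {set 'I_n} :=
  (EL :|: EM) :\ g.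
Definition two_sum_rank n (EL EM : {set 'I_n}) (rL rM : {set 'I_n} -> nat) (g : 'I_n)
  (S : {set 'I_n}) : nat :=
  (rL (S :&: EL) + rM (S :&: EM)
   - (in_closure rL (S :&: EL) g && in_closure rM (S :&: EM) g))%N.

Definition Zpoly (R : comNzRingType) n (Q : pred {set 'I_n}) : {mpoly R[n]} :=
  \sum_(S : {set 'I_n} | Q S) \prod_(e in S) 'X_e.

Definition setvar0 (R : comNzRingType) n (g : 'I_n) (P : {mpoly R[n]}) : {mpoly R[n]} :=
  P \mPo [tuple (if i == g then 0 else 'X_i) | i < n].

(* Main.v *)
Require Import Defs.
From HB Require Import structures.
From mathcomp Require Import all_boot all_order all_algebra.
From mathcomp Require Import mpoly.
From mathcomp Require Import zify.
Import GRing.Theory.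
Local Open Scope ring_scope.

Section Poly.
Variables (R : comNzRingType) (n : nat).
Definition XS (S : {set 'I_n}) : {mpoly R[n]} := \prod_(e in S) 'X_e.

Lemma setvar0_XS (g : 'I_n) (S : {set 'I_n}) : setvar0 g (XS S) = if g \in S then 0 else XS S.
Proof.
rewrite /setvar0 /XS rmorph_prod.
under eq_bigr => e _ do rewrite /= comp_mpolyXU -tnth_nth tnth_map tnth_ord_tuple.
case: ifP => gS.
  by rewrite (big_setD1 _ gS) eqxx /= mul0r.
rewrite [LHS](eq_bigr (fun e => 'X_e)) // => e eS.
by case: eqP => // ege; rewrite -ege eS in gS.
Qed.

Lemma mderiv_XS0 (g : 'I_n) (S : {set 'I_n}) : g \notin S -> (XS S)^`M(g) = 0.
Proof.
move=> gS; rewrite /XS.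
elim/big_rec: _ => [|e p eS IH]; first by rewrite -mpolyC1 mderivC.
rewrite mderivM IH mulr0 addr0 mderivX mnm1E.
by case: eqP => [ee|]; [rewrite -ee eS in gS | rewrite scale0r mul0r].
Qed.

Lemma mderiv_XS (g : 'I_n) (S : {set 'I_n}) : (XS S)^`M(g) = if g \in S then XS (S :\ g) else 0.
Proof.
case: ifP => gS; last by rewrite mderiv_XS0 // gS.
rewrite /XS (big_setD1 _ gS) /= mderivM -/(XS _) mderiv_XS0 ?setD11 // mulr0 addr0.
rewrite mderivX mnm1E eqxx.
have -> : mnm_sub U_(g) U_(g) = 0%MM.
  by apply/mnmP => i; rewrite mnmBE subnn mnm0E.
by rewrite mpolyX0 scale1r mul1r.
Qed.

Lemma setvar0_Z (g : 'I_n) (E : {set 'I_n}) (Q : pred {set 'I_n}) :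
  (forall S, Q S -> S \subset E) ->
  setvar0 g (Zpoly R Q) = \sum_(A : {set 'I_n} | A \subset E :\ g) (if Q A then XS A else 0).
Proof.
move=> hQ; rewrite /Zpoly /setvar0 raddf_sum.
rewrite [LHS](eq_bigr (fun S : {set 'I_n} => if g \in S then 0 else XS S)); last first.
  by move=> S _; exact: setvar0_XS.
rewrite big_mkcond [RHS]big_mkcond; apply: eq_bigr => S _.
rewrite subsetD1; case: (boolP (Q S)) => QS; last by case: ifP.
by rewrite hQ //=; case: (g \in S).
Qed.

Lemma mderiv_Z (g : 'I_n) (E : {set 'I_n}) (Q : pred {set 'I_n}) :
  (forall S, Q S -> S \subset E) ->
  (Zpoly R Q)^`M(g) = \sum_(A : {set 'I_n} | A \subset E :\ g) (if Q (g |: A) then XS A else 0).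
Proof.
move=> hQ; rewrite /Zpoly linear_sum.
rewrite [LHS](eq_bigr (fun S : {set 'I_n} => if g \in S then XS (S :\ g) else 0)); last first.
  by move=> S _; exact: mderiv_XS.
rewrite -big_mkcondr.
rewrite (reindex_onto (fun A : {set 'I_n} => g |: A) (fun S : {set 'I_n} => S :\ g)); last first.
  by move=> S /andP[_ gS]; rewrite setD1K.
rewrite -[RHS]big_mkcondr; apply: eq_big => A.
  rewrite setU11 andbT subsetD1.
  case: (boolP (g \in A)) => gA.
    have -> : (g |: A) :\ g == A = false.
      by apply: negbTE; apply/negP => /eqP e; move: gA; rewrite -e setD11.
    by rewrite andbF /= andbF.
  rewrite setU1K // eqxx andbT andbC; case: (boolP (Q _)) => //= /hQ.
  by rewrite andbT => h; symmetry; apply: subset_trans h; apply: subsetU1.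
by move=> /andP[_ /eqP ->].
Qed.
End Poly.

Lemma mat_facts {n} {E : {set 'I_n}} {r} {g} {A : {set 'I_n}} :
  is_matroid E r -> g \in E -> ~~ is_loop r g -> ~~ is_coloop E r g ->
  A \subset E :\ g ->
  [/\ r A <= #|A|, r A <= r (g |: A), r (g |: A) <= (r A).+1, r (g |: A) <= r E
    & (1 <= r E /\ 1 <= r (g |: A))]%N.
Proof.
move=> [h1 h2 h3] gE nl nc; rewrite subsetD1 => /andP[AE gA].
have gAE : g |: A \subset E by rewrite subUset sub1set gE AE.
have gE1 : [set g] \subset E by rewrite sub1set.
split; first exact: h1.
- exact: h2 (subsetU1 _ _) gAE.
- have := h3 _ _ AE gE1; have := h1 _ gE1; rewrite cards1 setUC.
  have := h1 (A :&: [set g]); lia.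
- exact: h2 gAE (subxx E).
split.
- have := h2 _ _ gE1 (subxx E); move: nl; rewrite /is_loop.
  by case: (r [set g]) => [//|k] _ h; exact: leq_trans h.
- have := h2 _ _ (subsetUl [set g] A) gAE; move: nl; rewrite /is_loop.
  by case: (r [set g]) => [//|k] _ h; exact: leq_trans h.
Qed.

Lemma rank_del {n} {E : {set 'I_n}} {r} {g} :
  is_matroid E r -> ~~ is_coloop E r g -> r (E :\ g) = r E.
Proof.
move=> [h1 h2 h3] nc; have := h2 (E :\ g) E (subD1set _ _) (subxx E).
move: nc; rewrite /is_coloop; lia.
Qed.

Section TwoSum.
Variables (R : comNzRingType) (n : nat) (EL EM : {set 'I_n})
  (rL rM : {set 'I_n} -> nat) (g : 'I_n).
Hypothesis HI : EL :&: EM = [set g].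

Let EN := two_sum_ground EL EM g.
Let rN := two_sum_rank EL EM rL rM g.

Lemma gL : g \in EL.
Proof. by have := set11 g; rewrite -HI inE => /andP[]. Qed.
Lemma gM : g \in EM.
Proof. by have := set11 g; rewrite -HI inE => /andP[]. Qed.
Lemma inter {x} : x \in EL -> x \in EM -> x = g.
Proof. by move=> xL xM; apply/set1P; rewrite -HI inE xL xM. Qed.

Lemma capL {A B : {set 'I_n}} : A \subset EL :\ g -> B \subset EM :\ g ->
  (A :|: B) :&: EL = A.
Proof.
move=> hA hB; apply/setP => x; rewrite !inE.
case xA: (x \in A) => /=; first by have := subsetP hA x xA; rewrite !inE => /andP[].
case xB: (x \in B) => //=; have := subsetP hB x xB; rewrite !inE => /andP[xg xM].
by apply/negbTE/negP => xL; rewrite (inter xL xM) eqxx in xg.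
Qed.

Lemma capM {A B : {set 'I_n}} : A \subset EL :\ g -> B \subset EM :\ g ->
  (A :|: B) :&: EM = B.
Proof.
move=> hA hB; apply/setP => x; rewrite !inE.
case xB: (x \in B); first by have := subsetP hB x xB; rewrite !inE => /andP[_ ->]; rewrite orbT.
rewrite orbF; case xA: (x \in A) => //=; have := subsetP hA x xA; rewrite !inE => /andP[xg xL].
by apply/negbTE/negP => xM; rewrite (inter xL xM) eqxx in xg.
Qed.

Lemma capAB {A B : {set 'I_n}} : A \subset EL :\ g -> B \subset EM :\ g ->
  A :&: B = set0.
Proof.
move=> hA hB; apply/setP => x; rewrite !inE.
case xA: (x \in A) => //=; case xB: (x \in B) => //=.
have := subsetP hA x xA; have := subsetP hB x xB; rewrite !inE => /andP[xg xM] /andP[_ xL].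
by rewrite (inter xL xM) eqxx in xg.
Qed.

Lemma XS_U {A B : {set 'I_n}} : A \subset EL :\ g -> B \subset EM :\ g ->
  @XS R n (A :|: B) = @XS R n A * @XS R n B.
Proof.
move=> hA hB; rewrite /XS (eq_bigl [predU A & B]) ?bigU //; last by move=> x; rewrite !inE.
by rewrite -setI_eq0 (capAB hA hB).
Qed.

Lemma cardAB {A B : {set 'I_n}} : A \subset EL :\ g -> B \subset EM :\ g ->
  #|A :|: B| = (#|A| + #|B|)%N.
Proof. by move=> hA hB; rewrite cardsU (capAB hA hB) cards0 subn0. Qed.

Lemma subAB {A B : {set 'I_n}} : A \subset EL :\ g -> B \subset EM :\ g ->
  A :|: B \subset EN.
Proof.
rewrite /EN /two_sum_ground !subsetD1 => /andP[hA gA] /andP[hB gB].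
rewrite subUset !inE negb_or gA gB andbT.
by rewrite (subset_trans hA (subsetUl _ _)) (subset_trans hB (subsetUr _ _)).
Qed.

Lemma split_sum (V : nmodType) (F : {set 'I_n} -> {set 'I_n} -> V) :
  \sum_(S : {set 'I_n} | S \subset EN) F (S :&: EL) (S :&: EM) =
  \sum_(A : {set 'I_n} | A \subset EL :\ g) \sum_(B : {set 'I_n} | B \subset EM :\ g) F A B.
Proof.
rewrite pair_big_dep /=.
rewrite [RHS](reindex_onto (fun S : {set 'I_n} => (S :&: EL, S :&: EM))
                 (fun p : {set 'I_n} * {set 'I_n} => p.1 :|: p.2)) /=; last first.
  by move=> [A B] /= /andP[hA hB]; rewrite (capL hA hB) (capM hA hB).
apply: eq_bigl => S.
apply/idP/idP.
  move=> hS; have hL : S :&: EL \subset EL :\ g.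
    apply/subsetP => x; rewrite !inE => /andP[xS ->]; have := subsetP hS x xS.
    by rewrite /EN /two_sum_ground !inE => /andP[-> _].
  have hM : S :&: EM \subset EM :\ g.
    apply/subsetP => x; rewrite !inE => /andP[xS ->]; have := subsetP hS x xS.
    by rewrite /EN /two_sum_ground !inE => /andP[-> _].
  rewrite hL hM /= -setIUr; apply/eqP/setIidPl.
  by apply: subset_trans hS _; apply: subD1set.
move=> /andP[/andP[hL hM] /eqP <-]; exact: subAB.
Qed.


Lemma subSL {S : {set 'I_n}} : S \subset EN -> S :&: EL \subset EL :\ g.
Proof.
move=> hS; apply/subsetP => x; rewrite !inE => /andP[xS ->]; have := subsetP hS x xS.
by rewrite /EN /two_sum_ground !inE => /andP[-> _].
Qed.
Lemma subSM {S : {set 'I_n}} : S \subset EN -> S :&: EM \subset EM :\ g.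
Proof.
move=> hS; apply/subsetP => x; rewrite !inE => /andP[xS ->]; have := subsetP hS x xS.
by rewrite /EN /two_sum_ground !inE => /andP[-> _].
Qed.

Lemma Z_N (P : pred {set 'I_n}) : (forall S, P S -> S \subset EN) ->
  Zpoly R P = \sum_(A : {set 'I_n} | A \subset EL :\ g)
     \sum_(B : {set 'I_n} | B \subset EM :\ g)
        (if P (A :|: B) then @XS R n A * @XS R n B else 0).
Proof.
move=> hP.
rewrite -(split_sum _ (fun A B => if P (A :|: B) then @XS R n A * @XS R n B else 0)) /Zpoly.
rewrite big_mkcond [RHS]big_mkcond /=; apply: eq_bigr => S _.
case: (boolP (S \subset EN)) => hS; last by case: ifP => // /hP; rewrite (negbTE hS).
have eS : (S :&: EL) :|: (S :&: EM) = S.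
  rewrite -setIUr; apply/setIidPl; apply: subset_trans hS _; exact: subD1set.
by rewrite -(XS_U (subSL hS) (subSM hS)) eS.
Qed.

Lemma rN_U {A B : {set 'I_n}} : A \subset EL :\ g -> B \subset EM :\ g ->
  rN (A :|: B) = (rL A + rM B - (in_closure rL A g && in_closure rM B g))%N.
Proof. by move=> hA hB; rewrite /rN /two_sum_rank (capL hA hB) (capM hA hB). Qed.

Lemma rN_EN : is_matroid EL rL -> is_matroid EM rM ->
  ~~ is_coloop EL rL g -> ~~ is_coloop EM rM g ->
  rN EN = (rL EL + rM EM - 1)%N.
Proof.
move=> mL mM cL cM.
have eL : EN :&: EL = EL :\ g.
  apply/setP => x; rewrite /EN /two_sum_ground !inE.
  by case: (x \in EL); rewrite ?orbT ?andbT ?andbF.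
have eM : EN :&: EM = EM :\ g.
  apply/setP => x; rewrite /EN /two_sum_ground !inE.
  by case: (x \in EM); rewrite ?orbT ?andbT ?andbF.
rewrite /rN /two_sum_rank eL eM /in_closure (setD1K gL) (setD1K gM).
by rewrite !(rank_del mL cL) !(rank_del mM cM) !eqxx.
Qed.

End TwoSum.

Section Pt.
Variable V : comNzRingType.
Lemma ptA (x y z w b : bool) (P Q : V) : b = x && y || z && w -> ~~ (x && z) ->
  (if b then P * Q else 0) =
  (if x then P else 0) * (if y then Q else 0) + (if z then P else 0) * (if w then Q else 0).
Proof.
move=> ->; case: x; case: y; case: z; case: w => //= _;
  by rewrite ?mul0r ?mulr0 ?addr0 ?add0r ?subr0 ?subrr ?addrK ?oppr0.
Qed.
Lemma ptB (iL iM cL cM : bool) (P Q : V) :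
  (if iL && iM && ~~ (cL && cM) then P * Q else 0) =
  (if iL then P else 0) * (if iM && ~~ cM then Q else 0)
  + (if iL && ~~ cL then P else 0) * (if iM then Q else 0)
  - (if iL && ~~ cL then P else 0) * (if iM && ~~ cM then Q else 0).
Proof.
case: iL; case: iM; case: cL; case: cM => /=;
  by rewrite ?mul0r ?mulr0 ?addr0 ?add0r ?subr0 ?subrr ?addrK ?oppr0.
Qed.
Lemma ptC (sN sL sM sLg sMg : bool) (P Q : V) :
  sN = sL && sMg || sLg && sM -> sL ==> sLg -> sM ==> sMg ->
  (if sN then P * Q else 0) =
  (if sL then P else 0) * (if sMg then Q else 0)
  + (if sLg then P else 0) * (if sM then Q else 0)
  - (if sL then P else 0) * (if sM then Q else 0).
Proof.
move=> ->; case: sL; case: sM; case: sLg; case: sMg => //= _ _;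
  by rewrite ?mul0r ?mulr0 ?addr0 ?add0r ?subr0 ?subrr ?addrK ?oppr0.
Qed.
End Pt.


Lemma mb_sub {n} {E : {set 'I_n}} {r} : forall S, mbasis E r S -> S \subset E.
Proof. by move=> S /andP[/andP[-> _] _]. Qed.
Lemma mi_sub {n} {E : {set 'I_n}} {r} : forall S, mindep E r S -> S \subset E.
Proof. by move=> S /andP[-> _]. Qed.
Lemma ms_sub {n} {E : {set 'I_n}} {r} : forall S, mspanning E r S -> S \subset E.
Proof. by move=> S /andP[-> _]. Qed.

Ltac cln :=
  repeat match goal with x := _ |- _ => clearbody x end;
  repeat match goal with
  | H : is_true _ |- _ => clear H | H : _ = _ |- _ => clear H
  | H : is_matroid _ _ |- _ => clear H end.

Ltac prep1 A E r g hA mat gE nl nc :=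
  let gA := fresh "gA" in let AE := fresh "AE" in let gAE := fresh "gAE" in
  let cA := fresh "cA" in
  have := hA; rewrite subsetD1 => /andP[AE gA];
  (have gAE : g |: A \subset E by rewrite subUset sub1set gE AE);
  (have cA : #|g |: A| = (#|A|).+1 by rewrite cardsU1 gA);
  case: (mat_facts mat gE nl nc hA);
  rewrite /mbasis /mindep /mspanning ?AE ?gAE ?cA /in_closure /=;
  let x1 := fresh "x" in let x2 := fresh "x" in let x3 := fresh "x" in let x4 := fresh "x" in
  set x1 := r (g |: A); set x2 := r A; set x3 := #|A|; set x4 := r E;
  let E1 := fresh "E" in
  case: (x1 =P x2) => E1; [rewrite E1 ?eqxx | move/eqP/negbTE: E1 => E1; rewrite ?E1 /=; move: E1].

Lemma indg {n} {E : {set 'I_n}} {r} {g} {A : {set 'I_n}} :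
  is_matroid E r -> g \in E -> ~~ is_loop r g -> ~~ is_coloop E r g ->
  A \subset E :\ g ->
  mindep E r (g |: A) = mindep E r A && ~~ in_closure r A g.
Proof. move=> mat gE nl nc hA; prep1 A E r g hA mat gE nl nc; cln; lia. Qed.

Lemma spg {n} {E : {set 'I_n}} {r} {g} {A : {set 'I_n}} :
  is_matroid E r -> g \in E -> ~~ is_loop r g -> ~~ is_coloop E r g ->
  A \subset E :\ g ->
  mspanning E r A ==> mspanning E r (g |: A).
Proof. move=> mat gE nl nc hA; prep1 A E r g hA mat gE nl nc; cln; lia. Qed.

Lemma exclb {n} {E : {set 'I_n}} {r} {g} {A : {set 'I_n}} :
  is_matroid E r -> g \in E -> ~~ is_loop r g -> ~~ is_coloop E r g ->
  A \subset E :\ g ->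
  ~~ (mbasis E r A && mbasis E r (g |: A)).
Proof. move=> mat gE nl nc hA; prep1 A E r g hA mat gE nl nc; cln; lia. Qed.

Section Key.
Variables (n : nat) (EL EM : {set 'I_n}) (rL rM : {set 'I_n} -> nat) (g : 'I_n).
Hypotheses (matL : is_matroid EL rL) (matM : is_matroid EM rM)
  (HI : EL :&: EM = [set g]) (nlL : ~~ is_loop rL g) (ncL : ~~ is_coloop EL rL g)
  (nlM : ~~ is_loop rM g) (ncM : ~~ is_coloop EM rM g).
Variables (A B : {set 'I_n}) (hA : A \subset EL :\ g) (hB : B \subset EM :\ g).

Ltac prepN :=
  rewrite /mbasis /mindep /mspanning ?(rN_U _ _ _ rL rM _ HI hA hB)
    ?(rN_EN _ _ _ _ _ _ HI matL matM ncL ncM) ?(cardAB _ _ _ _ HI hA hB)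
    ?(subAB _ _ _ _ hA hB);
  prep1 A EL rL g hA matL (gL _ _ _ _ HI) nlL ncL;
  prep1 B EM rM g hB matM (gM _ _ _ _ HI) nlM ncM.

Lemma keyA : mbasis (two_sum_ground EL EM g) (two_sum_rank EL EM rL rM g) (A :|: B) =
  mbasis EL rL A && mbasis EM rM (g |: B) || mbasis EL rL (g |: A) && mbasis EM rM B.
Proof. prepN; cln; lia. Qed.

Lemma keyB : mindep (two_sum_ground EL EM g) (two_sum_rank EL EM rL rM g) (A :|: B) =
  mindep EL rL A && mindep EM rM B && ~~ (in_closure rL A g && in_closure rM B g).
Proof. prepN; cln; lia. Qed.

Lemma keyC : mspanning (two_sum_ground EL EM g) (two_sum_rank EL EM rL rM g) (A :|: B) =
  mspanning EL rL A && mspanning EM rM (g |: B) || mspanning EL rL (g |: A) && mspanning EM rM B.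
Proof. prepN; cln; lia. Qed.
End Key.

Theorem corollary5p7 (R : comNzRingType) (n : nat) (EL EM : {set 'I_n})
  (rL rM : {set 'I_n} -> nat) (g : 'I_n) :
  is_matroid EL rL -> is_matroid EM rM ->
  EL :&: EM = [set g] ->
  ~~ is_loop rL g -> ~~ is_coloop EL rL g ->
  ~~ is_loop rM g -> ~~ is_coloop EM rM g ->
  let EN := two_sum_ground EL EM g in
  let rN := two_sum_rank EL EM rL rM g in
  [/\ (let N := @Zpoly R n (mbasis EN rN) in
       let L := @Zpoly R n (mbasis EL rL) in
       let M := @Zpoly R n (mbasis EM rM) in
       N = setvar0 g L * M^`M(g) + L^`M(g) * setvar0 g M),
      (let N := @Zpoly R n (mindep EN rN) in
       let L := @Zpoly R n (mindep EL rL) in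
       let M := @Zpoly R n (mindep EM rM) in
       N = setvar0 g L * M^`M(g) + L^`M(g) * setvar0 g M - L^`M(g) * M^`M(g)) &
      (let N := @Zpoly R n (mspanning EN rN) in
       let L := @Zpoly R n (mspanning EL rL) in
       let M := @Zpoly R n (mspanning EM rM) in
       N = setvar0 g L * M^`M(g) + L^`M(g) * setvar0 g M - setvar0 g L * setvar0 g M)].
Proof.
move=> matL matM HI nlL ncL nlM ncM EN rN.
have gL' := gL _ _ _ _ HI; have gM' := gM _ _ _ _ HI.
split => N L M; rewrite {}/N {}/L {}/M {}/EN {}/rN.
- rewrite (Z_N R _ _ _ _ HI _ mb_sub).
  rewrite (setvar0_Z _ _ g EL _ mb_sub) (setvar0_Z _ _ g EM _ mb_sub).
  rewrite (mderiv_Z _ _ g EL _ mb_sub) (mderiv_Z _ _ g EM _ mb_sub).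
  rewrite !big_distrlr /= -big_split /=; apply: eq_bigr => A hA.
  rewrite -big_split /=; apply: eq_bigr => B hB.
  apply: ptA; first exact: keyA.
  exact: exclb matL gL' nlL ncL hA.
- rewrite (Z_N R _ _ _ _ HI _ mi_sub).
  rewrite (setvar0_Z _ _ g EL _ mi_sub) (setvar0_Z _ _ g EM _ mi_sub).
  rewrite (mderiv_Z _ _ g EL _ mi_sub) (mderiv_Z _ _ g EM _ mi_sub).
  rewrite !big_distrlr /= -big_split /= -sumrB; apply: eq_bigr => A hA.
  rewrite -big_split /= -sumrB; apply: eq_bigr => B hB.
  rewrite (keyB _ _ _ _ _ _ matL matM HI nlL ncL nlM ncM _ _ hA hB).
  rewrite (indg matL gL' nlL ncL hA) (indg matM gM' nlM ncM hB).
  exact: ptB.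
- rewrite (Z_N R _ _ _ _ HI _ ms_sub).
  rewrite (setvar0_Z _ _ g EL _ ms_sub) (setvar0_Z _ _ g EM _ ms_sub).
  rewrite (mderiv_Z _ _ g EL _ ms_sub) (mderiv_Z _ _ g EM _ ms_sub).
  rewrite !big_distrlr /= -big_split /= -sumrB; apply: eq_bigr => A hA.
  rewrite -big_split /= -sumrB; apply: eq_bigr => B hB.
  apply: ptC; first exact: keyC.
  + exact: spg matL gL' nlL ncL hA.
  + exact: spg matM gM' nlM ncM hB.
Qed.
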